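(* Let $d\ge 1$ be an integer, $K=d+3$, and let $\overline{\gamma}=(\gamma_1,\dots,\gamma_d)\in\mathbb{R}^d$ satisfy condition (KM). Let $X$ be $\mathbb{R}^2$ with a norm $\|\cdot\|_X$ whose closed unit ball $BX$ is a symmetric convex polygon with $2K$ sides whose $K$ pairwise non-parallel sides have slopes $\gamma_1,\dots,\gamma_d,0,1,\infty$, and write $BX=\bigcap_{k=1}^K\{x:|x\cdot b_k|\le 1\}$ with vectors $b_1,\dots,b_K\in\mathbb{R}^2$. Then for every $\varepsilon>0$ there are constants $C,c>0$ (depending on $\varepsilon$) and arbitrarily large integers $n$ for which there exist sets $A=A(n)\subset B(0,1/2)$ with $|A|=n$ such that $$|(A-A)\cdot b_k|\le C n^{1/2+\varepsilon},\quad k=1,\dots,K$$ (in particular $|\Delta_X(A)|\le C' n^{1/2+\varepsilon}$ for a constant $C'$ independent of $n$), and $$\|x-x'\|_X\ge c\, n^{-1/2-\varepsilon}\quad\text{for all } x,x'\in A,\ x\ne x'.$$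
   Context: Slopes are with respect to the standard coordinates: the slope of a non-degenerate segment on the line $u_1x_1+u_2x_2+u_0=0$ is $-u_1/u_2$ (and $\infty$ if $u_2=0$). For a positive integer $L$ let $\mathcal{L}(L)=\{\overline{l}=(l_1,\dots,l_d)\in\mathbb{Z}^d: 0\le l_k<L\}$. A vector $\overline{\gamma}\in\mathbb{R}^d$ satisfies condition (KM) if for every positive integer $L$ and every $\varepsilon>0$, $\inf|\sum_{\overline{l}\in\mathcal{L}(L)} n_{\overline{l}}\gamma_1^{l_1}\cdots\gamma_d^{l_d}|\cdot(\max_{\overline{l}}|n_{\overline{l}}|)^{(1+\varepsilon)L^d}>0$, the infimum over all nonzero integer vectors $(n_{\overline{l}})_{\overline{l}\in\mathcal{L}(L)}$. $B(x,r)$ is the closed Euclidean ball; $|A|$ is cardinality; $A-A=\{a-a'\}$, $A\cdot v=\{a\cdot v:a\in A\}$; $\Delta_X(A)=\{\|x-x'\|_X:x,x'\in A\}$. The constants are independent of $n$. *)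

(* Defs.v *)
From HB Require Import structures.
From mathcomp Require Import all_boot all_order all_algebra.
From mathcomp Require Import all_classical all_reals all_analysis.
Set Implicit Arguments. Unset Strict Implicit. Unset Printing Implicit Defensive.
Import Order.TTheory GRing.Theory Num.Theory.
Local Open Scope ring_scope.

Definition dot2 {R : realType} (x y : R * R) : R := x.1 * y.1 + x.2 * y.2.
Definition sub2 {R : realType} (x y : R * R) : R * R := (x.1 - y.1, x.2 - y.2).

(* slope of a segment on the line u1 x1 + u2 x2 + u0 = 0, with u = (u1,u2):
   Some (-u1/u2), or None standing for infinity when u2 = 0 *)
Definition slope {R : realType} (u : R * R) : option R :=
  if u.2 == 0 then None else Some (- u.1 / u.2).

Definition normX {R : realType} (K : nat) (b : 'I_K -> R * R) (x : R * R) : R :=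
  \big[Num.max/0]_(k < K) `|dot2 x (b k)|.

(* condition (KM); index set L(L) = {ffun 'I_d -> 'I_L};
   "inf ... > 0" is written as the existence of a positive lower bound *)
Definition KM {R : realType} (d : nat) (gamma : 'I_d -> R) : Prop :=
  forall (L : nat), (0 < L)%N -> forall eps : R, 0 < eps ->
  exists delta : R, 0 < delta /\
    forall nv : {ffun {ffun 'I_d -> 'I_L} -> int},
      [exists l, nv l != 0] ->
      delta <= `| \sum_(l : {ffun 'I_d -> 'I_L})
                     (nv l)%:~R * \prod_(k < d) gamma k ^+ (nat_of_ord (l k)) |
               * powR ((\max_(l : {ffun 'I_d -> 'I_L}) `|nv l|%N)%:R)
                      ((1 + eps) * (L ^ d)%:R).

Definition diffdot {R : realType} (A : seq (R * R)) (v : R * R) : seq R :=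
  undup [seq dot2 (sub2 a a') v | a <- A, a' <- A].

Definition distset {R : realType} (K : nat) (b : 'I_K -> R * R)
  (A : seq (R * R)) : seq R :=
  undup [seq normX b (sub2 a a') | a <- A, a' <- A].

(* Main.v *)
Require Import Defs.
From HB Require Import structures.
From mathcomp Require Import all_boot all_order all_algebra.
From mathcomp Require Import all_classical all_reals all_analysis.
From mathcomp Require Import zify ring lra.
Import Order.TTheory GRing.Theory Num.Theory.
Local Open Scope ring_scope.

Definition gmon {R : realType} {d L : nat} (gamma : 'I_d -> R)
  (l : {ffun 'I_d -> 'I_L}) : R := \prod_(k < d) gamma k ^+ (nat_of_ord (l k)).

Definition widenf {d L : nat} (l : {ffun 'I_d -> 'I_L}) : {ffun 'I_d -> 'I_L.+1} :=
  [ffun i => widen_ord (leqnSn L) (l i)].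
Definition shiftf {d L : nat} (k : 'I_d) (l : {ffun 'I_d -> 'I_L}) : {ffun 'I_d -> 'I_L.+1} :=
  [ffun i => if i == k then lift ord0 (l i) else widen_ord (leqnSn L) (l i)].

Lemma gmon_widen (R : realType) (d L : nat) (gamma : 'I_d -> R) (l : {ffun 'I_d -> 'I_L}) :
  gmon gamma (widenf l) = gmon gamma l.
Proof. by apply: eq_bigr => i _; rewrite ffunE. Qed.

Lemma gmon_shift (R : realType) (d L : nat) (gamma : 'I_d -> R) (k : 'I_d) (l : {ffun 'I_d -> 'I_L}) :
  gmon gamma (shiftf k l) = gamma k * gmon gamma l.
Proof.
rewrite /gmon (bigD1 k) //=. rewrite [in RHS](bigD1 k) //=. rewrite /shiftf ffunE eqxx /= /bump leq0n add1n exprS -mulrA.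
congr (_ * (_ * _)); apply: eq_bigr => i /negbTE hi; by rewrite ffunE hi.
Qed.

Lemma widenf_inj (d L : nat) : injective (@widenf d L).
Proof.
move=> l l' h; apply/ffunP => i; have := congr1 (fun f : {ffun _ -> _} => f i) h.
by rewrite !ffunE => /(congr1 val) /= /val_inj.
Qed.

Lemma shiftf_inj (d L : nat) (k : 'I_d) : injective (@shiftf d L k).
Proof.
move=> l l' h; apply/ffunP => i; have := congr1 (fun f : {ffun _ -> _} => f i) h.
rewrite !ffunE; case: (i == k) => /(congr1 val) /=.
  by rewrite /bump !leq0n !add1n => -[] /val_inj.
by move/val_inj.
Qed.

Definition transf {I I' : finType} (h : I -> I') (e : I -> int) (l' : I') : int :=
  \sum_(l | h l == l') e l.

Lemma isum_transf (R : realType) (I I' : finType) (h : I -> I') (e : I -> int) (G : I' -> R) :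
  \sum_l' ((transf h e l')%:~R * G l') = \sum_l (e l)%:~R * G (h l).
Proof.
under eq_bigr => l' _ do rewrite /transf rmorph_sum mulr_suml big_mkcond.
rewrite exchange_big; apply: eq_bigr => l _.
rewrite -big_mkcond /=.
under eq_bigl => l' do rewrite eq_sym.
by rewrite big_pred1_eq.
Qed.

Lemma transf_bound (I I' : finType) (h : I -> I') (e : I -> int) (B : int) l' :
  injective h -> (forall l, `|e l| <= B) -> 0 <= B -> `|transf h e l'| <= B.
Proof.
move=> hi hb hB; rewrite /transf.
case: (pickP (fun l => h l == l')) => [l0 hl0|h0].
  rewrite (eq_bigl (pred1 l0)) ?big_pred1_eq //.
  move=> l /=; apply/idP/idP => [/eqP hl|/eqP ->//].
  by apply/eqP; apply: hi; rewrite hl (eqP hl0).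
by rewrite big_pred0 // normr0.
Qed.

Lemma count_img (R : realType) (T : finType) (F : T -> R) (s : seq R) :
  (forall x, x \in s -> exists t, x = F t) -> (size (undup s) <= #|T|)%N.
Proof.
move=> h; rewrite cardE -(size_map F).
apply: uniq_leq_size; first exact: undup_uniq.
move=> x; rewrite mem_undup => /h [t ->]; apply: map_f; exact: mem_enum.
Qed.

Lemma count_code (R : realType) (I' : finType) (B : nat) (G : I' -> R) (alpha : R)
  (s : seq R) :
  (forall x, x \in s -> exists c : I' -> int, (forall l, `|c l| <= B%:Z) /\
       x = alpha * \sum_l (c l)%:~R * G l) ->
  (size (undup s) <= (B * 2).+1 ^ #|I'|)%N.
Proof.
move=> h.
have := @count_img R {ffun I' -> 'I_(B * 2).+1}
  (fun f => alpha * \sum_l ((f l : nat)%:Z - B%:Z)%:~R * G l) s.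
rewrite card_ffun card_ord; apply => x /h [c [hc ->]].
exists [ffun l => inord (absz (c l + B%:Z)%R)].
congr (_ * _); apply: eq_bigr => l _; rewrite ffunE inordK; last first.
  by have := hc l; lia.
congr (_%:~R * _); have := hc l; lia.
Qed.

Lemma normX_ge (R : realType) (K : nat) (b : 'I_K -> R * R) x k :
  `|dot2 x (b k)| <= normX b x.
Proof.
rewrite /normX; have : k \in index_enum 'I_K by rewrite mem_index_enum.
elim: (index_enum 'I_K) => // i r IH; rewrite inE big_cons => /orP [/eqP ->|/IH h].
  by rewrite le_max lexx.
by rewrite le_max h orbT.
Qed.

Lemma normX_in (R : realType) (K : nat) (b : 'I_K -> R * R) x :
  normX b x \in 0 :: [seq `|dot2 x (b k)| | k <- enum 'I_K].
Proof.
rewrite /normX; apply: (big_rec (fun v => v \in 0 :: [seq `|dot2 x (b k)| | k <- enum 'I_K])).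
  by rewrite mem_head.
move=> i v _ hv; rewrite /Num.max; case: ifP => _ //.
by rewrite inE; apply/orP; right; apply: map_f; rewrite mem_enum.
Qed.

Lemma distset_bound (R : realType) (K : nat) (b : 'I_K -> R * R) (A : seq (R * R)) (X : nat) :
  (forall k, size (diffdot A (b k)) <= X)%N -> (size (distset b A) <= 1 + K * X)%N.
Proof.
move=> hX.
pose t : seq R := 0 :: flatten [seq [seq `|v| | v <- diffdot A (b k)] | k <- enum 'I_K].
apply: (@leq_trans (size t)).
  apply: uniq_leq_size; first exact: undup_uniq.
  move=> y; rewrite mem_undup => /allpairsP [[a a'] [ha ha' /= ->]].
  have := @normX_in _ _ b (sub2 a a'); rewrite inE => /orP [/eqP ->|]; first by rewrite mem_head.
  move=> /mapP [k hk ->]; rewrite inE; apply/orP; right.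
  apply/flattenP; exists [seq `|v| | v <- diffdot A (b k)]; first by apply: map_f.
  apply: map_f; rewrite /diffdot mem_undup; apply/allpairsP; by exists (a, a'); split.
rewrite /t /= add1n ltnS size_flatten /shape -map_comp.
rewrite -[X in (_ <= X * _)%N](size_enum_ord K) mulnC -sum1_size big_distrr /= muln1.
rewrite /sumn foldrE big_map; apply: leq_sum => k _ /=; by rewrite size_map.
Qed.

Lemma bern (R : realType) (x : R) (d : nat) : 0 <= x ->
  (x + 1) ^+ d * (x + 1 - d%:R) <= x ^+ d * (x + 1).
Proof.
move=> hx; elim: d => [|d IH]; first by rewrite !expr0 subr0.
have h1 : 0 <= (x + 1) ^+ d by apply: exprn_ge0; lra.
have h2 : 0 <= x ^+ d by apply: exprn_ge0.
have -> : (x + 1) ^+ d.+1 * (x + 1 - d.+1%:R) =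
   x * ((x + 1) ^+ d * (x + 1 - d%:R)) - d%:R * (x + 1) ^+ d.
  by rewrite exprS -natr1; ring.
rewrite exprS.
have h3 : 0 <= d%:R * (x + 1) ^+ d :> R by apply: mulr_ge0.
have h4 : x * ((x + 1) ^+ d * (x + 1 - d%:R)) <= x * (x ^+ d * (x + 1)).
  by apply: ler_wpM2l.
lra.
Qed.

Lemma choose_L (R : realType) (d : nat) (eps : R) : (1 <= d)%N -> 0 < eps ->
  exists L : nat, (0 < L)%N /\ 1 <= eps * (L ^ d)%:R /\
    ((L.+1) ^ d)%:R <= (1 + 2 * eps) * (L ^ d)%:R.
Proof.
move=> hd he.
pose X := eps^-1 + d%:R * (1 + 2 * eps) / (2 * eps).
have hX0 : 0 <= X.
  rewrite /X; apply: addr_ge0; first by rewrite invr_ge0 ltW.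
  apply: divr_ge0; last lra. apply: mulr_ge0 => //; lra.
exists (Num.trunc X).+1; split => //.
have hL := truncnS_gt X.
set L := (Num.trunc X).+1 in hL *.
have hL1 : (1 <= L)%N by [].
have hLd : L%:R <= (L ^ d)%:R :> R.
  rewrite ler_nat; rewrite -{1}(expn1 L); apply: leq_pexp2l => //.
have hinv : eps^-1 <= X.
  rewrite /X lerDl; apply: divr_ge0; last lra. apply: mulr_ge0 => //; lra.
split.
  have h0 : eps^-1 < L%:R by apply: le_lt_trans hL.
  have h1 : eps * eps^-1 = 1 by rewrite mulfV // gt_eqF.
  have h2 : eps * eps^-1 < eps * L%:R by rewrite ltr_pM2l.
  have h3 : eps * L%:R <= eps * (L ^ d)%:R by apply: ler_wpM2l => //; exact: ltW.
  lra.
have hb := @bern R L%:R d (ler0n R L).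
rewrite !natrX -natr1.
set P := (_ ^+ d) in hb *. set Q := (_ ^+ d) in hb *.
have hQ : 0 <= Q by apply: exprn_ge0.
have h0 : X < L%:R by [].
have hdX : d%:R * (1 + 2 * eps) / (2 * eps) <= X.
  rewrite /X lerDr invr_ge0 ltW //.
have h5 : d%:R * (1 + 2 * eps) < 2 * eps * L%:R.
  rewrite -ltr_pdivrMl; last lra. rewrite mulrC. apply: le_lt_trans hdX h0.
have hd0 : 0 <= d%:R :> R by [].
have ha : 0 < L%:R + 1 - d%:R :> R.
  have : d%:R < 2 * eps * (L%:R - d%:R) :> R by lra.
  case: (lerP (L%:R : R) (d%:R)) => h; last lra.
  have : 2 * eps * (L%:R - d%:R) <= 0 :> R.
    rewrite pmulr_rle0; lra.
  lra.
have h6 : Q * (L%:R + 1) <= Q * ((1 + 2 * eps) * (L%:R + 1 - d%:R)).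
  apply: ler_wpM2l => //; nra.
have h7 : P * (L%:R + 1 - d%:R) <= ((1 + 2 * eps) * Q) * (L%:R + 1 - d%:R).
  rewrite -mulrA; lra.
by rewrite ler_pM2r in h7.
Qed.

Lemma slope_some (R : realType) (u : R * R) s : slope u = Some s -> u.2 != 0 /\ u.1 = - s * u.2.
Proof.
rewrite /slope; case: eqP => // h [] <-; split; first by apply/eqP.
have h2 : u.2 != 0 by apply/eqP. by rewrite mulNr -mulrA mulVf // mulr1 opprK.
Qed.

Lemma slope_none (R : realType) (u : R * R) : slope u = None -> u.2 = 0.
Proof. by rewrite /slope; case: eqP. Qed.

Lemma npow (R : realType) (M D : nat) (r : R) :
  powR ((M ^ D)%N%:R) r = powR (M%:R) (D%:R * r).
Proof. by rewrite natrX -powR_mulrn // powRrM. Qed.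

Lemma sumB_int (R : realType) (I : finType) (t1 t2 : I -> int) (G : I -> R) :
  \sum_l ((t1 l - t2 l)%:~R * G l) = \sum_l ((t1 l)%:~R * G l) - \sum_l ((t2 l)%:~R * G l).
Proof. by rewrite -sumrB; apply: eq_bigr => l _; rewrite rmorphB mulrBl. Qed.

Lemma ed_bound (M : nat) (a b : 'I_M) : `|(a : nat)%:Z - (b : nat)%:Z| <= M%:Z.
Proof. have := ltn_ord a; have := ltn_ord b; lia. Qed.

Lemma ed_zero (M : nat) (a b : 'I_M) : (a : nat)%:Z - (b : nat)%:Z = 0 -> a = b.
Proof. move=> h; apply: val_inj => /=; lia. Qed.

Lemma absz_bound (x : int) (M : nat) : `|x| <= M%:Z -> (absz x <= M)%N.
Proof. lia. Qed.

Lemma int_bound2 (x y : int) (M : nat) : `|x| <= M%:Z -> `|y| <= M%:Z -> `|x - y| <= (Posz (M * 2)%N).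
Proof. lia. Qed.

Lemma int_bound1 (x : int) (M : nat) : `|x| <= M%:Z -> `|x| <= (Posz (M * 2)%N).
Proof. lia. Qed.

Lemma cases4 (d k : nat) : (k < d + 3)%N -> (k < d)%N \/ k = d \/ k = d.+1 \/ k = d.+2.
Proof. lia. Qed.

Lemma leq_5M (M : nat) : (0 < M)%N -> ((M * 2 * 2).+1 <= 5 * M)%N.
Proof. lia. Qed.

Theorem lemma2p1 (R : realType) (d : nat) (gamma : 'I_d -> R)
  (b : 'I_(d + 3) -> R * R) :
  (1 <= d)%N ->
  KM gamma ->
  (forall k, b k != (0, 0)) ->
  (forall k : 'I_(d + 3), forall (hk : (k < d)%N),
      slope (b k) = Some (gamma (Ordinal hk))) ->
  (forall k : 'I_(d + 3), nat_of_ord k = d -> slope (b k) = Some 0) ->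
  (forall k : 'I_(d + 3), nat_of_ord k = d.+1 -> slope (b k) = Some 1) ->
  (forall k : 'I_(d + 3), nat_of_ord k = d.+2 -> slope (b k) = None) ->
  (forall k k' : 'I_(d + 3), k != k' -> slope (b k) != slope (b k')) ->
  (forall k : 'I_(d + 3), exists x y : R * R, x != y /\
      normX b x <= 1 /\ normX b y <= 1 /\
      dot2 x (b k) = 1 /\ dot2 y (b k) = 1) ->
  forall eps : R, 0 < eps ->
  exists C c C' : R, 0 < C /\ 0 < c /\ 0 < C' /\
  forall N : nat, exists n : nat, (N <= n)%N /\
  exists A : seq (R * R),
    uniq A /\ size A = n /\
    (forall x, x \in A -> x.1 ^+ 2 + x.2 ^+ 2 <= (2^-1) ^+ 2) /\
    (forall k, (size (diffdot A (b k)))%:R <= C * powR n%:R (2^-1 + eps)) /\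
    (size (distset b A))%:R <= C' * powR n%:R (2^-1 + eps) /\
    (forall x x', x \in A -> x' \in A -> x != x' ->
        c * powR n%:R (- 2^-1 - eps) <= normX b (sub2 x x')).
Proof.
move=> hd hKM hb0 hsl hs0 hs1 hsinf _ _ eps heps.
have [L [hL0 [hLe hLc]]] := @choose_L R d eps hd heps.
have [delta [hdel hKMd]] := hKM L hL0 eps heps.
pose D := (L ^ d)%N. rewrite -/D in hLe hLc.
pose G : R := \sum_(l : {ffun 'I_d -> 'I_L}) `|gmon gamma l|.
have hG : 0 <= G by apply: sumr_ge0.
have kinf_lt : (d.+2 < d + 3)%N by lia.
have k0_lt : (d < d + 3)%N by lia.
pose kinf := Ordinal kinf_lt; pose k0 := Ordinal k0_lt.
have hbi2 : (b kinf).2 = 0 by apply: (@slope_none R); apply: hsinf.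
have hbi1 : (b kinf).1 != 0.
  move: (hb0 kinf) hbi2; case: (b kinf) => u1 u2 /= h h2; move: h; rewrite h2.
  by apply: contraNneq => ->.
have [hb02 hb01] : (b k0).2 != 0 /\ (b k0).1 = 0.
  have [h1 h2] := @slope_some _ _ _ (hs0 k0 erefl); split => //; by rewrite h2 oppr0 mul0r.
pose mu := Num.min `|(b kinf).1| `|(b k0).2|.
have hmu : 0 < mu by rewrite lt_min !normr_gt0 hbi1 hb02.
pose E' := ((L.+1) ^ d)%N.
pose C : R := (5 ^ E')%:R.
have hC : 0 < C by rewrite ltr0n expn_gt0.
exists C, (mu * delta / (4 * (G + 1))), (1 + (d + 3)%:R * C).
split => //.
split; first by apply: divr_gt0; [apply: mulr_gt0 | lra].
split.
  have : 0 <= (d + 3)%:R * C by apply: mulr_ge0 => //; exact: ltW.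
  lra.
move=> N.
pose M := N.+1.
have hD0 : (0 < D)%N by rewrite expn_gt0 hL0.
exists (M ^ (D * 2))%N; split.
  apply: (@leq_trans (M ^ 1)); first by rewrite expn1. apply: leq_pexp2l => //.
  by rewrite muln_gt0 hD0.
have hM1 : 1 <= M%:R :> R by rewrite ler1n.
have hM0 : 0 < M%:R :> R by rewrite ltr0n.
pose lam : R := (4 * M%:R * (G + 1))^-1.
have hlam : 0 < lam by rewrite invr_gt0; apply: mulr_gt0; [apply: mulr_gt0|]; lra.
pose FM := {ffun {ffun 'I_d -> 'I_L} -> 'I_M}.
pose vs (m : FM) : R := \sum_l ((m l : nat)%:Z)%:~R * gmon gamma l.
pose ed (m m' : FM) (l : {ffun 'I_d -> 'I_L}) : int := (m l : nat)%:Z - (m' l : nat)%:Z.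
have hvsB : forall m m', vs m - vs m' = \sum_l (ed m m' l)%:~R * gmon gamma l.
  by move=> m m'; rewrite /vs /ed -sumrB; apply: eq_bigr => l _; rewrite rmorphB mulrBl.
have hed : forall m m' l, `|ed m m' l| <= M%:Z.
  by move=> m m' l; apply: ed_bound.
pose E := (1 + eps) * D%:R.
have hE : 0 <= E by apply: mulr_ge0; [lra | exact: ler0n].
have hPE : 0 < powR M%:R E by apply: powR_gt0.
have hsep : forall m m', m != m' -> delta / powR M%:R E <= `|vs m - vs m'|.
  move=> m m' hmm.
  have hex : [exists l, [ffun l => ed m m' l] l != 0].
    apply: contraNT hmm; rewrite negb_exists => /forallP h; apply/eqP/ffunP => l.
    by have := h l; rewrite ffunE negbK /ed => /eqP /ed_zero.
  have := hKMd _ hex.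
  have -> : \sum_l ([ffun l => ed m m' l] l)%:~R * \prod_(k < d) gamma k ^+ l k = vs m - vs m'.
    by rewrite hvsB; apply: eq_bigr => l _; rewrite ffunE.
  move=> h; rewrite ler_pdivrMr //; apply: (le_trans h); apply: ler_wpM2l => //.
  apply: ge0_ler_powR => //; rewrite ?nnegrE ?ler0n //.
  rewrite ler_nat; apply/bigmax_leqP => l _; rewrite ffunE.
  exact: absz_bound.
have hsep0 : 0 < delta / powR M%:R E by apply: divr_gt0.
have hvs_inj : injective vs.
  move=> m m' h; apply/eqP; apply: contraT => hmm; have := hsep m m' hmm.
  rewrite h subrr normr0; lra.
pose pt (m1 m2 : FM) : R * R := (lam * vs m1, lam * vs m2).
pose A := [seq pt m1 m2 | m1 <- enum FM, m2 <- enum FM].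
have hA : forall x, x \in A -> exists m1 m2, x = pt m1 m2.
  by move=> x /allpairsP [[m1 m2] [_ _ /= ->]]; exists m1, m2.
exists A; split.
  apply: allpairs_uniq; try exact: enum_uniq.
  move=> [m1 m2] [m1' m2'] _ _ /= [] h1 h2.
  have hl : lam != 0 by rewrite gt_eqF.
  by rewrite (hvs_inj _ _ (mulfI hl h1)) (hvs_inj _ _ (mulfI hl h2)).
split.
  by rewrite size_allpairs -cardE card_ffun !card_ord card_ffun !card_ord -expnD addnn -mul2n mulnC.
have hvsb : forall m, `|lam * vs m| <= 4^-1.
  move=> m.
  have h1 : `|vs m| <= M%:R * G.
    apply: (le_trans (ler_norm_sum _ _ _)); rewrite /G mulr_sumr; apply: ler_sum => l _.
    rewrite normrM; apply: ler_wpM2r => //.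
    by rewrite [`|_|]ger0_norm ?ler0n // ler_nat ltnW.
  have h2 : lam * (4 * M%:R * (G + 1)) = 1 by rewrite mulVf // gt_eqF //; apply: mulr_gt0; [apply: mulr_gt0|]; lra.
  have h3 : lam * `|vs m| <= lam * (M%:R * G) by apply: ler_wpM2l => //; exact: ltW.
  have h4 : lam * (M%:R * G) <= lam * (M%:R * (G + 1)).
    apply: ler_wpM2l; first exact: ltW. apply: ler_wpM2l; [exact: ltW | lra].
  rewrite normrM gtr0_norm //.
  have h5 : lam * (M%:R * (G + 1)) = 4^-1 * (lam * (4 * M%:R * (G + 1))).
    by rewrite !mulrA [4^-1 * lam]mulrC -!mulrA; congr (_ * _); rewrite mulrA mulVf // mul1r.
  rewrite h2 mulr1 in h5; lra.
split.
  move=> x /hA [m1 [m2 ->]] /=; have h1 := hvsb m1; have h2 := hvsb m2.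
  rewrite ler_norml in h1; rewrite ler_norml in h2.
  case/andP: h1 => h1 h1'; case/andP: h2 => h2 h2'.
  have -> : (2^-1 : R) ^+ 2 = 4^-1 by rewrite expr2 -invfM; congr (_^-1); lra.
  nra.
pose X := ((M * 2 * 2).+1 ^ E')%N.
have hcnt : forall k, (size (diffdot A (b k)) <= X)%N.
  move=> k.
  have hW : forall e : {ffun 'I_d -> 'I_L} -> int,
      \sum_(l' : {ffun 'I_d -> 'I_L.+1}) ((transf widenf e l')%:~R * gmon gamma l') =
      \sum_l (e l)%:~R * gmon gamma l.
    move=> e; rewrite (@isum_transf R); apply: eq_bigr => l _; by rewrite gmon_widen.
  have hS : forall (k' : 'I_d) (e : {ffun 'I_d -> 'I_L} -> int),
      \sum_(l' : {ffun 'I_d -> 'I_L.+1}) ((transf (shiftf k') e l')%:~R * gmon gamma l') =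
      gamma k' * \sum_l (e l)%:~R * gmon gamma l.
    move=> k' e; rewrite (@isum_transf R) mulr_sumr; apply: eq_bigr => l _.
    by rewrite gmon_shift mulrCA.
  have hTb : forall (h : {ffun 'I_d -> 'I_L} -> {ffun 'I_d -> 'I_L.+1}) m m' l',
      injective h -> `|transf h (ed m m') l'| <= M%:Z.
    by move=> h m m' l' hi; apply: transf_bound => //; exact: hed.
  have hdot : forall m1 m2 m1' m2', dot2 (sub2 (pt m1 m2) (pt m1' m2')) (b k) =
      lam * ((vs m1 - vs m1') * (b k).1 + (vs m2 - vs m2') * (b k).2).
    by move=> *; rewrite /dot2 /sub2 /=; ring.
  have key : exists alpha : R, forall m1 m2 m1' m2',
      exists c : {ffun 'I_d -> 'I_L.+1} -> int, (forall l, `|c l| <= (Posz (M * 2)%N)) /\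
      dot2 (sub2 (pt m1 m2) (pt m1' m2')) (b k) = alpha * \sum_l (c l)%:~R * gmon gamma l.
    case: (@cases4 d k (ltn_ord k)) => [hk|[hk|[hk|hk]]].
    - have [h2 h1] := @slope_some _ _ _ (hsl k hk).
      exists (lam * (b k).2) => m1 m2 m1' m2'.
      exists (fun l' => transf widenf (ed m2 m2') l' - transf (shiftf (Ordinal hk)) (ed m1 m1') l').
      split.
        move=> l'; apply: int_bound2; apply: hTb; [exact: widenf_inj | exact: shiftf_inj].
      by rewrite hdot sumB_int hW hS !hvsB h1; ring.
    - have [h2 h1] := @slope_some _ _ _ (hs0 k hk).
      exists (lam * (b k).2) => m1 m2 m1' m2'.
      exists (fun l' => transf widenf (ed m2 m2') l').
      split.
        move=> l'; apply: int_bound1; apply: hTb; exact: widenf_inj.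
      by rewrite hdot hW !hvsB h1; ring.
    - have [h2 h1] := @slope_some _ _ _ (hs1 k hk).
      exists (lam * (b k).2) => m1 m2 m1' m2'.
      exists (fun l' => transf widenf (ed m2 m2') l' - transf widenf (ed m1 m1') l').
      split.
        move=> l'; apply: int_bound2; apply: hTb; exact: widenf_inj.
      by rewrite hdot sumB_int !hW !hvsB h1; ring.
    - have h2 := @slope_none _ _ (hsinf k hk).
      exists (lam * (b k).1) => m1 m2 m1' m2'.
      exists (fun l' => transf widenf (ed m1 m1') l').
      split.
        move=> l'; apply: int_bound1; apply: hTb; exact: widenf_inj.
      by rewrite hdot hW !hvsB h2; ring.
  have [alpha halpha] := key.
  have := @count_code R {ffun 'I_d -> 'I_L.+1} (M * 2) (gmon gamma) alpha
    [seq dot2 (sub2 a a') (b k) | a <- A, a' <- A].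
  rewrite card_ffun !card_ord; apply.
  move=> x /allpairsP [[a a'] [ha ha' ->]] /=.
  have [m1 [m2 ->]] := hA a ha; have [m1' [m2' ->]] := hA a' ha'.
  exact: halpha.
have hpow : powR (M ^ (D * 2))%N%:R (2^-1 + eps) = powR M%:R ((1 + 2 * eps) * D%:R).
  by rewrite npow; congr powR; rewrite natrM; field.
have hP1 : 1 <= powR (M ^ (D * 2))%N%:R (2^-1 + eps).
  rewrite hpow.
  have he : 0 <= (1 + 2 * eps) * D%:R by apply: mulr_ge0; [lra | exact: ler0n].
  by have := ler_powR hM1 he; rewrite powRr0.
have hX : X%:R <= C * powR (M ^ (D * 2))%N%:R (2^-1 + eps).
  have h1 : (X <= 5 ^ E' * M ^ E')%N.
    by rewrite /X -expnMn leq_exp2r ?expn_gt0 //; exact: leq_5M.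
  apply: (le_trans (y := (5 ^ E' * M ^ E')%N%:R)); first by rewrite ler_nat.
  have hMe : (M ^ E')%N%:R = powR M%:R E'%:R :> R by rewrite natrX powR_mulrn ?ler0n.
  rewrite natrM hMe hpow; apply: ler_wpM2l; first exact: ltW.
  exact: ler_powR.
split.
  move=> k; apply: le_trans hX; rewrite ler_nat; exact: hcnt.
split.
  have h := @distset_bound R _ b A X hcnt.
  apply: (le_trans (y := (1 + (d + 3) * X)%N%:R)); first by rewrite ler_nat.
  rewrite natrD natrM mulrDl mul1r -mulrA.
  apply: lerD => //; apply: ler_wpM2l => //.
move=> x x' /hA [m1 [m2 ->]] /hA [m1' [m2' ->]] hne.
have hmuk : mu <= `|(b kinf).1| /\ mu <= `|(b k0).2|.
  by split; rewrite /mu ge_min lexx ?orbT.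
have hlow : lam * (mu * (delta / powR M%:R E)) <= normX b (sub2 (pt m1 m2) (pt m1' m2')).
  case: (eqVneq m1 m1') => [e1|n1].
  - subst m1'; have n2 : m2 != m2' by apply: contraNneq hne => ->.
    apply: le_trans (@normX_ge R _ b _ k0).
    rewrite /dot2 /sub2 /= hb01 mulr0 add0r -mulrBr !normrM (gtr0_norm hlam).
    rewrite -mulrA; apply: ler_wpM2l; first exact: ltW.
    rewrite mulrC; apply: ler_pM; [exact: ltW | exact: ltW | exact: hsep | exact: hmuk.2].
  - apply: le_trans (@normX_ge R _ b _ kinf).
    rewrite /dot2 /sub2 /= hbi2 mulr0 addr0 -mulrBr !normrM (gtr0_norm hlam).
    rewrite -mulrA; apply: ler_wpM2l; first exact: ltW.
    rewrite mulrC; apply: ler_pM; [exact: ltW | exact: ltW | exact: hsep | exact: hmuk.1].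
apply: le_trans hlow.
have hexp : (D * 2)%N%:R * (- 2^-1 - eps) <= - (1 + E).
  rewrite natrM /E; nra.
have hp1 : powR M%:R ((D * 2)%N%:R * (- 2^-1 - eps)) <= (M%:R * powR M%:R E)^-1.
  apply: (le_trans (ler_powR hM1 hexp)).
  rewrite powRN powRD ?pnatr_eq0 ?implybT // powRr1 ?ler0n //.
rewrite npow.
have hc : 0 <= mu * delta / (4 * (G + 1)).
  apply: divr_ge0; [apply: mulr_ge0; exact: ltW | lra].
apply: (le_trans (ler_wpM2l hc hp1)).
rewrite /lam le_eqVlt; apply/orP; left; apply/eqP; field.
have hG1 : 0 < G + 1 by lra.
by rewrite !gt_eqF.
Qed.
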